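(* Let $X>0$ and let $w:[0,X]\to\mathbb{R}$ be a smooth function with $w''(x)\ge w(x)$ and $w(x)\ge0$ for all $x\in[0,X]$, and $w'(0)\ge0$. Let $p:[0,X]\to\mathbb{R}^+$ be a decreasing integrable function. Then \[\int_0^Xp(x)w(x)\,dx\le\Big(\frac{p(0)}{\cosh(X/2)}+p(X/2)\Big)\int_0^Xw(x)\,dx.\] *)

(* Defs.v *)
From Stdlib Require Export Reals.
From Coquelicot Require Export Coquelicot.
Open Scope R_scope.

Definition smooth (w : R -> R) : Prop := forall (n : nat) (x : R), ex_derive_n w n x.

(* Main.v *)
Require Import Defs.
From Stdlib Require Import Lra Lia ZArith.
Notation floor := Coquelicot.Rcomplements.floor.
Open Scope R_scope.

Lemma mono_le (f df : R -> R) a b : a <= b ->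
  (forall x, a <= x <= b -> is_derive f x (df x)) ->
  (forall x, a <= x <= b -> 0 <= df x) -> f a <= f b.
Proof.
intros hab hd hpos.
destruct (MVT_gen f a b df) as [c [hc e]].
- intros x hx. apply hd. rewrite Rmin_left, Rmax_right in hx; lra.
- intros x hx. rewrite Rmin_left, Rmax_right in hx by lra.
  apply continuity_pt_filterlim. apply (@ex_derive_continuous R_AbsRing R_NormedModule).
  exists (df x). apply hd. lra.
- rewrite Rmin_left, Rmax_right in hc by lra.
  assert (0 <= df c * (b - a)) by (apply Rmult_le_pos; [apply hpos; lra|lra]). lra.
Qed.

Lemma lip_le (f df : R -> R) M a b : a <= b ->
  (forall x, a <= x <= b -> is_derive f x (df x)) ->
  (forall x, a <= x <= b -> df x <= M) -> f b - f a <= M * (b - a).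
Proof.
intros hab hd hpos.
destruct (MVT_gen f a b df) as [c [hc e]].
- intros x hx. apply hd. rewrite Rmin_left, Rmax_right in hx; lra.
- intros x hx. rewrite Rmin_left, Rmax_right in hx by lra.
  apply continuity_pt_filterlim. apply (@ex_derive_continuous R_AbsRing R_NormedModule).
  exists (df x). apply hd. lra.
- rewrite Rmin_left, Rmax_right in hc by lra.
  rewrite e. apply Rmult_le_compat_r; [lra|]. apply hpos; lra.
Qed.

Section S.
Variable w : R -> R.
Hypothesis hw : smooth w.

Lemma d1 x : is_derive w x (Derive w x).
Proof. apply Derive_correct. exact (hw 1%nat x). Qed.
Lemma d2 x : is_derive (Derive w) x (Derive_n w 2 x).
Proof. apply Derive_correct. exact (hw 2%nat x). Qed.
Lemma cw x : continuous w x.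
Proof. apply (@ex_derive_continuous R_AbsRing R_NormedModule). exact (hw 1%nat x). Qed.
End S.

Lemma aab a b Y : a * b = 1 -> a * a * (b * Y) = a * Y.
Proof. intros H. replace (a*a*(b*Y)) with (a*(a*b)*Y) by ring. rewrite H; ring. Qed.

Section T.
Variables (X : R) (w : R -> R).
Hypothesis (hw : smooth w)
  (hw2 : forall x, 0 <= x <= X -> Derive_n w 2 x >= w x)
  (hw0 : forall x, 0 <= x <= X -> w x >= 0)
  (hw'0 : Derive w 0 >= 0).

Lemma dw_nonneg x : 0 <= x <= X -> 0 <= Derive w x.
Proof.
intros hx. assert (Derive w 0 <= Derive w x); [|lra].
apply (mono_le _ (Derive_n w 2)); [lra| |].
- intros; apply d2; auto.
- intros y hy. specialize (hw2 y ltac:(lra)). specialize (hw0 y ltac:(lra)). lra.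
Qed.

Lemma w_mono x y : 0 <= x -> x <= y -> y <= X -> w x <= w y.
Proof.
intros. apply (mono_le _ (Derive w)); [lra| |].
- intros; apply d1; auto.
- intros z hz; apply dw_nonneg; lra.
Qed.

Lemma dw_mono x y : 0 <= x -> x <= y -> y <= X -> Derive w x <= Derive w y.
Proof.
intros. apply (mono_le _ (Derive_n w 2)); [lra| |].
- intros; apply d2; auto.
- intros z hz. specialize (hw2 z ltac:(lra)). specialize (hw0 z ltac:(lra)). lra.
Qed.

Lemma compare t s : 0 <= t -> 0 <= s -> t + s <= X -> w t * cosh s <= w (t + s).
Proof.
intros ht hs htsX.
set (c := w t).
set (A := fun x => exp (-x) * (Derive w x - c * sinh (x - t) + (w x - c * cosh (x - t)))).
set (B := fun x => exp x * (w x - c * cosh (x - t))).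
assert (hA : forall x, is_derive A x (exp (-x) * (Derive_n w 2 x - w x))).
{ intros x. unfold A. unfold cosh, sinh.
  pose proof (hw 1%nat x). pose proof (hw 2%nat x).
  auto_derive.
  - split; [exact H0|split; [exact H|exact I]].
  - simpl. change (fun x0 : R => w x0) with w. change (fun x0 : R => Derive w x0) with (Derive w).
    lazymatch goal with |- ?a = ?b => change (@eq R a b) end; ring. }
assert (hB : forall x, is_derive B x (exp x * exp x * A x)).
{ intros x. unfold B, A. unfold cosh, sinh.
  pose proof (hw 1%nat x).
  auto_derive.
  - exact H.
  - change (fun x0 : R => w x0) with w.
    lazymatch goal with |- ?a = ?b => change (@eq R a b) end.
    assert (E : exp x * exp (-x) = 1) by (rewrite <- exp_plus; replace (x + -x) with 0 by ring; apply exp_0).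
    rewrite (aab _ _ _ E). unfold Rminus, Rdiv. lazymatch goal with |- ?a = ?b => change (@eq R a b) end. ring. }
assert (hAt : forall x, t <= x <= t + s -> 0 <= A x).
{ intros x hx. apply Rle_trans with (A t).
  - unfold A. replace (t - t) with 0 by ring. rewrite sinh_0, cosh_0.
    unfold c. replace (Derive w t - w t * 0 + (w t - w t * 1)) with (Derive w t) by ring.
    apply Rmult_le_pos; [left; apply exp_pos| apply dw_nonneg; lra].
  - apply (mono_le _ (fun x => exp (-x) * (Derive_n w 2 x - w x))); [lra| |].
    + intros; apply hA.
    + intros y hy. specialize (hw2 y ltac:(lra)).
      apply Rmult_le_pos; [left; apply exp_pos|lra]. }
assert (hBt : B t <= B (t + s)).
{ apply (mono_le _ (fun x => exp x * exp x * A x)); [lra| |].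
  - intros; apply hB.
  - intros y hy. apply Rmult_le_pos; [|apply hAt; lra].
    apply Rmult_le_pos; left; apply exp_pos. }
unfold B in hBt. replace (t - t) with 0 in hBt by ring. rewrite cosh_0 in hBt.
replace (t + s - t) with s in hBt by ring.
replace (w t - c * 1) with 0 in hBt by (unfold c; ring). rewrite Rmult_0_r in hBt.
assert (0 <= w (t + s) - c * cosh s).
{ apply Rmult_le_reg_l with (exp (t + s)); [apply exp_pos|]. lra. }
unfold c in *; lra.
Qed.
End T.

Lemma nat_unb r : exists n : nat, r < INR n.
Proof.
destruct (archimed (Rabs r)) as [h1 _].
assert (0 <= Rabs r) by apply Rabs_pos.
assert (hz : (0 <= up (Rabs r))%Z).
{ apply le_IZR. lra. }
exists (Z.to_nat (up (Rabs r))). rewrite INR_IZR_INZ, Z2Nat.id by exact hz.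
pose proof (Rle_abs r). lra.
Qed.

Lemma floor_spec x : IZR (floor x) <= x < IZR (floor x) + 1.
Proof. unfold floor. destruct (floor_ex x) as [m hm]. simpl. exact hm. Qed.

Lemma floor_unique x (k : Z) : IZR k <= x < IZR k + 1 -> floor x = k.
Proof.
intros hk. pose proof (floor_spec x).
assert (h1 : (floor x < k + 1)%Z) by (apply lt_IZR; rewrite plus_IZR; lra).
assert (h2 : (k < floor x + 1)%Z) by (apply lt_IZR; rewrite plus_IZR; lra).
lia.
Qed.

Definition clamp X x := Rmax 0 (Rmin X x).

Lemma clamp_in X x : 0 < X -> 0 <= clamp X x <= X.
Proof. intros. unfold clamp, Rmax, Rmin. repeat destruct Rle_dec; lra. Qed.

Lemma clamp_id X x : 0 <= x <= X -> clamp X x = x.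
Proof. intros. unfold clamp, Rmax, Rmin. repeat destruct Rle_dec; lra. Qed.

Section I.
Variables (X : R) (w p : R -> R).
Hypothesis (hX : 0 < X) (hw : smooth w)
  (hw2 : forall x, 0 <= x <= X -> Derive_n w 2 x >= w x)
  (hw0 : forall x, 0 <= x <= X -> w x >= 0)
  (hw'0 : Derive w 0 >= 0)
  (hp_pos : forall x, 0 <= x <= X -> 0 < p x)
  (hp_dec : forall x y, 0 <= x -> x <= y -> y <= X -> p y <= p x)
  (hp_int : ex_RInt p 0 X).

Let hh (n : nat) := X / INR (S n).
Let sn (n : nat) x := hh n * IZR (floor (clamp X x / hh n)).
Let fn (n : nat) x := p (clamp X x) * w (sn n x).
Let g x := p (clamp X x) * w (clamp X x).

Lemma hh_pos n : 0 < hh n.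
Proof. unfold hh. apply Rdiv_lt_0_compat; [lra|apply lt_0_INR; lia]. Qed.

Lemma sn_spec n x : 0 <= sn n x <= clamp X x /\ clamp X x - sn n x < hh n.
Proof.
pose proof (hh_pos n). pose proof (clamp_in X x hX).
pose proof (floor_spec (clamp X x / hh n)).
set (m := floor (clamp X x / hh n)) in *.
assert (hm : (0 <= m)%Z).
{ assert (IZR (-1) < IZR m); [|apply lt_IZR in H2; lia].
  assert (0 <= clamp X x / hh n) by (apply Rdiv_le_0_compat; lra). simpl; lra. }
apply IZR_le in hm.
unfold sn. fold m.
assert (e : clamp X x = hh n * (clamp X x / hh n)) by (field; lra).
split; [split|].
- apply Rmult_le_pos; lra.
- rewrite e at 1. apply Rmult_le_compat_l; lra.
- rewrite e at 1. rewrite <- Rmult_minus_distr_l.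
  replace (hh n) with (hh n * 1) at 3 by ring.
  apply Rmult_lt_compat_l; lra.
Qed.

Lemma fn_bound n x : Rabs (fn n x - g x) <= p 0 * Derive w X * hh n.
Proof.
pose proof (sn_spec n x) as [[h1 h2] h3]. pose proof (clamp_in X x hX).
set (c := clamp X x) in *. set (s := sn n x) in *.
unfold fn, g. fold c. fold s.
assert (hM : 0 <= Derive w X) by (apply (dw_nonneg X w); auto; lra).
assert (hws : w s <= w c) by (apply (w_mono X w); auto; lra).
assert (hl : w c - w s <= Derive w X * (c - s)).
{ apply (lip_le _ (Derive w)); [lra| |].
  - intros; apply d1; auto.
  - intros y hy. apply (dw_mono X w); auto; lra. }
assert (hpc : 0 < p c) by (apply hp_pos; lra).
assert (hpc0 : p c <= p 0) by (apply hp_dec; lra).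
rewrite Rabs_left1.
2: { assert (0 <= p c * (w c - w s)) by (apply Rmult_le_pos; lra). nra. }
assert (p c * (w c - w s) <= p 0 * (Derive w X * hh n)).
{ apply Rmult_le_compat; try lra.
  apply Rle_trans with (Derive w X * (c - s)); [lra|].
  apply Rmult_le_compat_l; lra. }
nra.
Qed.

Lemma fn_int n : ex_RInt (fn n) 0 X.
Proof.
pose proof (hh_pos n) as Hh.
assert (hX' : X = INR (S n) * hh n) by (unfold hh; field; apply not_0_INR; lia).
assert (HK : forall k, (k <= S n)%nat -> ex_RInt (fn n) 0 (INR k * hh n)).
{ induction k as [|k IH]; intros hk.
  - simpl. rewrite Rmult_0_l. apply ex_RInt_point.
  - assert (hk1 : INR (S k) * hh n <= X).
    { rewrite hX'. apply Rmult_le_compat_r; [lra|]. apply le_INR; lia. }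
    rewrite S_INR in hk1 |- *.
    replace ((INR k + 1) * hh n) with (INR k * hh n + hh n) in hk1 |- * by ring.
    assert (hk0 : 0 <= INR k * hh n) by (apply Rmult_le_pos; [apply pos_INR|lra]).
    apply ex_RInt_Chasles with (INR k * hh n); [apply IH; lia|].
    apply ex_RInt_ext with (fun x => scal (w (INR k * hh n)) (p x)).
    + rewrite Rmin_left, Rmax_right by lra. intros x hx.
      unfold fn. rewrite clamp_id by lra. unfold sn. rewrite clamp_id by lra.
      rewrite (floor_unique _ (Z.of_nat k)).
      * rewrite <- INR_IZR_INZ. rewrite (Rmult_comm (hh n)). change (scal (w (INR k * hh n)) (p x)) with (w (INR k * hh n) * p x). apply Rmult_comm.
      * rewrite <- INR_IZR_INZ. split.
        -- apply Rmult_le_reg_r with (hh n); [lra|]. unfold Rdiv. rewrite Rmult_assoc, Rinv_l by lra. rewrite Rmult_1_r. lra.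
        -- apply Rmult_lt_reg_r with (hh n); [lra|]. unfold Rdiv. rewrite Rmult_assoc, Rinv_l by lra. rewrite Rmult_1_r. lra.
    + assert (Hp : ex_RInt p (INR k * hh n) (INR k * hh n + hh n)).
      { apply (@ex_RInt_Chasles_1 R_CompleteNormedModule) with X; [lra|].
        apply (@ex_RInt_Chasles_2 R_CompleteNormedModule) with 0; [lra|exact hp_int]. }
      exact (@ex_RInt_scal R_NormedModule p _ _ (w (INR k * hh n)) Hp). }
rewrite hX'. apply HK. lia.
Qed.

Lemma pw_int : ex_RInt (fun x => p x * w x) 0 X.
Proof.
destruct (@filterlim_RInt nat R_CompleteNormedModule fn 0 X Hierarchy.eventually eventually_filter g
  (fun n => RInt (fn n) 0 X)) as [If [_ HI]].
- intros n; apply RInt_correct; apply fn_int.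
- intros P [eps HP].
  assert (hM : 0 <= Derive w X) by (apply (dw_nonneg X w); auto; lra).
  assert (hp0 : 0 < p 0) by (apply hp_pos; lra).
  destruct (nat_unb (p 0 * Derive w X * X / eps)) as [N hN].
  exists N. intros n hn. apply HP. intros t.
  change (Rabs (fn n t - g t) < eps).
  eapply Rle_lt_trans; [apply fn_bound|].
  pose proof (cond_pos eps).
  assert (INR N <= INR n) by (apply le_INR; lia).
  unfold hh. rewrite S_INR.
  assert (p 0 * Derive w X * X < eps * (INR n + 1)).
  { apply Rmult_lt_reg_r with (/ eps). apply Rinv_0_lt_compat; lra.
    replace (eps * (INR n + 1) * / eps) with (INR n + 1) by (field; lra).
    unfold Rdiv in hN. lra. }
  apply Rmult_lt_reg_r with (INR n + 1). pose proof (pos_INR n); lra.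
  replace (p 0 * Derive w X * (X / (INR n + 1)) * (INR n + 1)) with (p 0 * Derive w X * X)
    by (field; pose proof (pos_INR n); lra). lra.
- apply ex_RInt_ext with g.
  + rewrite Rmin_left, Rmax_right by lra. intros x hx. unfold g. rewrite clamp_id by lra. reflexivity.
  + exists If; exact HI.
Qed.
End I.

Theorem proposition5p4 (X : R) (w p : R -> R)
  (hX : 0 < X)
  (hw : smooth w)
  (hw2 : forall x, 0 <= x <= X -> Derive_n w 2 x >= w x)
  (hw0 : forall x, 0 <= x <= X -> w x >= 0)
  (hw'0 : Derive w 0 >= 0)
  (hp_pos : forall x, 0 <= x <= X -> 0 < p x)
  (hp_dec : forall x y, 0 <= x -> x <= y -> y <= X -> p y <= p x)
  (hp_int : ex_RInt p 0 X) :
  RInt (fun x => p x * w x) 0 X <= (p 0 / cosh (X / 2) + p (X / 2)) * RInt w 0 X.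
Proof.
set (H := X / 2).
assert (hH : 0 < H) by (unfold H; lra).
assert (hXH : X = H + H) by (unfold H; field).
set (c := cosh H).
assert (hc : 0 < c) by (unfold c, cosh; pose proof (exp_pos H); pose proof (exp_pos (-H)); lra).
assert (wint : forall a b, ex_RInt w a b).
{ intros a b. apply (@ex_RInt_continuous R_CompleteNormedModule). intros z _. apply cw; auto. }
assert (pwint := pw_int X w p hX hw hw2 hw0 hw'0 hp_pos hp_dec hp_int).
set (pw := fun x => p x * w x) in *.
assert (pw1 : ex_RInt pw 0 H).
{ apply (@ex_RInt_Chasles_1 R_CompleteNormedModule) with X; [lra|exact pwint]. }
assert (pw2 : ex_RInt pw H X).
{ apply (@ex_RInt_Chasles_2 R_CompleteNormedModule) with 0; [lra|exact pwint]. }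
set (I1 := RInt w 0 H). set (I2 := RInt w H X).
assert (hS : RInt w 0 X = I1 + I2).
{ symmetry. exact (@RInt_Chasles R_CompleteNormedModule w 0 H X (wint _ _) (wint _ _)). }
assert (hP : RInt pw 0 X = RInt pw 0 H + RInt pw H X).
{ symmetry. exact (@RInt_Chasles R_CompleteNormedModule pw 0 H X pw1 pw2). }
assert (hI1 : 0 <= I1).
{ apply RInt_ge_0; [lra|apply wint|]. intros x hx. specialize (hw0 x ltac:(lra)). lra. }
assert (hI2 : I2 = RInt (fun t => w (t + H)) 0 H).
{ unfold I2.
  pose proof (@RInt_comp_lin R_CompleteNormedModule w 1 H 0 H (wint _ _)) as E.
  replace (1 * 0 + H) with H in E by ring. replace (1 * H + H) with X in E by lra.
  rewrite <- E. apply (@RInt_ext R_CompleteNormedModule). intros x _.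
  change (scal 1 (w (1 * x + H))) with (1 * w (1 * x + H)).
  rewrite Rmult_1_l, Rmult_1_l. reflexivity. }
assert (hcI1 : c * I1 <= I2).
{ rewrite hI2. unfold I1.
  assert (E : RInt (fun t => c * w t) 0 H = c * RInt w 0 H).
  { exact (@RInt_scal R_CompleteNormedModule w 0 H c (wint _ _)). }
  rewrite <- E. apply RInt_le; [lra| | |].
  - apply (@ex_RInt_scal R_NormedModule w 0 H c). apply wint.
  - pose proof (@ex_RInt_comp_lin R_CompleteNormedModule w 1 H 0 H) as E2.
    apply (@ex_RInt_ext R_NormedModule) with (fun y => scal 1 (w (1 * y + H))).
    + intros x _. change (scal 1 (w (1 * x + H))) with (1 * w (1 * x + H)).
      rewrite Rmult_1_l, Rmult_1_l. reflexivity.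
    + apply E2. apply wint.
  - intros x hx. rewrite Rmult_comm. unfold c.
    apply (compare X w hw hw2 hw0 hw'0); lra. }
assert (hp0 : 0 < p 0) by (apply hp_pos; lra).
assert (hpH : 0 < p H) by (apply hp_pos; lra).
assert (hJ1 : RInt pw 0 H <= p 0 * I1).
{ unfold I1. assert (E : RInt (fun t => (p 0) * w t) 0 H = (p 0) * RInt w 0 H) by exact (@RInt_scal R_CompleteNormedModule w 0 H (p 0) (wint _ _)).
  rewrite <- E.
  apply RInt_le; [lra|exact pw1| |].
  - apply (@ex_RInt_scal R_NormedModule w 0 H (p 0)). apply wint.
  - intros x hx. unfold pw. 
    specialize (hw0 x ltac:(lra)). apply Rmult_le_compat_r; [lra|].
    apply hp_dec; lra. }
assert (hJ2 : RInt pw H X <= p H * I2).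
{ unfold I2. assert (E : RInt (fun t => (p H) * w t) H X = (p H) * RInt w H X) by exact (@RInt_scal R_CompleteNormedModule w H X (p H) (wint _ _)).
  rewrite <- E.
  apply RInt_le; [lra|exact pw2| |].
  - apply (@ex_RInt_scal R_NormedModule w H X (p H)). apply wint.
  - intros x hx. unfold pw. 
    specialize (hw0 x ltac:(lra)). apply Rmult_le_compat_r; [lra|].
    apply hp_dec; lra. }
fold H. fold c. rewrite hP, hS.
assert (K : p 0 * I1 <= p 0 / c * (I1 + I2)).
{ assert (p 0 * I1 = p 0 / c * (c * I1)) by (field; lra). rewrite H0.
  apply Rmult_le_compat_l; [apply Rlt_le, Rdiv_lt_0_compat; lra|lra]. }
assert (0 <= p H * I1) by (apply Rmult_le_pos; lra).
replace ((p 0 / c + p H) * (I1 + I2)) with (p 0 / c * (I1 + I2) + p H * I1 + p H * I2) by ring.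
lra.
Qed.
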